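(* Let $\{G_i: i\in I\}$ be a family of (Hausdorff) topological groups and let $G=\prod_{i\in I}G_i$ be their product with the Tychonoff product topology. If $G$ is $g$-reversible, then every factor $G_i$ is $g$-reversible.
   Context: All topological groups are assumed Hausdorff. A topological group $G$ is called $g$-reversible if every continuous automorphism of $G$ (i.e. every continuous group isomorphism of $G$ onto itself) is an open map. *)

(* Defs.v *)
From Stdlib Require Import List.
Set Implicit Arguments.

Record TopGroup := {
  tg_car :> Type;
  tg_mul : tg_car -> tg_car -> tg_car;
  tg_one : tg_car;
  tg_inv : tg_car -> tg_car;
  tg_open : (tg_car -> Prop) -> Prop;
  tg_mulA : forall x y z, tg_mul x (tg_mul y z) = tg_mul (tg_mul x y) z;
  tg_mul1 : forall x, tg_mul tg_one x = x;
  tg_mulV : forall x, tg_mul (tg_inv x) x = tg_one;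
  tg_open_ext : forall U V : tg_car -> Prop,
      (forall x, U x <-> V x) -> tg_open U -> tg_open V;
  tg_open_full : tg_open (fun _ => True);
  tg_open_inter : forall U V, tg_open U -> tg_open V ->
      tg_open (fun x => U x /\ V x);
  tg_open_union : forall F : (tg_car -> Prop) -> Prop,
      (forall U, F U -> tg_open U) ->
      tg_open (fun x => exists U, F U /\ U x);
  (* continuity of multiplication (w.r.t. the product topology on G x G) *)
  tg_mul_cont : forall U x y, tg_open U -> U (tg_mul x y) ->
      exists V W, tg_open V /\ tg_open W /\ V x /\ W y /\
        (forall a b, V a -> W b -> U (tg_mul a b));
  tg_inv_cont : forall U, tg_open U -> tg_open (fun x => U (tg_inv x));
  tg_hausdorff : forall x y : tg_car, x <> y ->
      exists U V, tg_open U /\ tg_open V /\ U x /\ V y /\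
        (forall z, U z -> V z -> False)
}.

Definition continuous_map (T : Type) (opn : (T -> Prop) -> Prop) (f : T -> T) :=
  forall U, opn U -> opn (fun x => U (f x)).

Definition open_map (T : Type) (opn : (T -> Prop) -> Prop) (f : T -> T) :=
  forall U, opn U -> opn (fun y => exists x, U x /\ y = f x).

Definition cont_automorphism (T : Type) (mul : T -> T -> T)
    (opn : (T -> Prop) -> Prop) (f : T -> T) :=
  (forall x y, f (mul x y) = mul (f x) (f y)) /\
  (forall x y, f x = f y -> x = y) /\
  (forall y, exists x, f x = y) /\
  continuous_map opn f.

Definition g_reversible_data (T : Type) (mul : T -> T -> T)
    (opn : (T -> Prop) -> Prop) :=
  forall f : T -> T, cont_automorphism mul opn f -> open_map opn f.

Definition g_reversible (G : TopGroup) :=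
  g_reversible_data (@tg_mul G) (@tg_open G).

(** Product of a family of topological groups: pointwise multiplication and
    the Tychonoff product topology (U is open iff every point of U has a basic
    neighbourhood, i.e. a finite intersection of open cylinders, inside U). *)
Definition prod_mul (I : Type) (G : I -> TopGroup)
    (x y : forall i, tg_car (G i)) : forall i, tg_car (G i) :=
  fun i => tg_mul (G i) (x i) (y i).

Definition prod_open (I : Type) (G : I -> TopGroup)
    (U : (forall i, tg_car (G i)) -> Prop) : Prop :=
  forall x, U x ->
    exists (l : list I) (V : forall i, tg_car (G i) -> Prop),
      (forall i, In i l -> tg_open (G i) (V i)) /\
      (forall i, In i l -> V i (x i)) /\
      (forall y : forall i, tg_car (G i), (forall i, In i l -> V i (y i)) -> U y).

(* Main.v *)
Require Import Defs.
From Stdlib Require Import List.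
From Stdlib Require Import Classical ClassicalEpsilon FunctionalExtensionality ProofIrrelevance.

Definition upd (I : Type) (A : I -> Type) (x : forall j, A j) (i : I) (a : A i) :
  forall j, A j := fun j =>
  match excluded_middle_informative (i = j) with
  | left e => eq_rect i A a j e
  | right _ => x j end.

Lemma upd_eq (I : Type) (A : I -> Type) x i a : @upd I A x i a i = a.
Proof.
  unfold upd. destruct (excluded_middle_informative (i = i)) as [e|n].
  - rewrite (proof_irrelevance _ e eq_refl). reflexivity.
  - exfalso; apply n; reflexivity.
Qed.

Lemma upd_neq (I : Type) (A : I -> Type) x i a j : i <> j -> @upd I A x i a j = x j.
Proof.
  intro h. unfold upd. destruct (excluded_middle_informative (i = j)) as [e|n].
  - contradiction. - reflexivity.
Qed.

Lemma upd_self (I : Type) (A : I -> Type) x i : @upd I A x i (x i) = x.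
Proof.
  apply functional_extensionality_dep; intro j.
  destruct (classic (i = j)) as [e|n].
  - subst j. apply upd_eq.
  - apply upd_neq; auto.
Qed.

Theorem theorem9p1 (I : Type) (G : I -> TopGroup) :
  g_reversible_data (@prod_mul I G) (@prod_open I G) ->
  forall i : I, g_reversible (G i).
Proof.
  intros H i f [fhom [finj [fsurj fcont]]].
  set (A := fun j => tg_car (G j)).
  set (F := fun x : forall j, A j => @upd I A x i (f (x i))).
  assert (Fi : forall x, F x i = f (x i)) by (intro; apply upd_eq).
  assert (Fn : forall x j, i <> j -> F x j = x j) by (intros; apply upd_neq; auto).
  assert (Faut : cont_automorphism (@prod_mul I G) (@prod_open I G) F).
  { split; [|split; [|split]].
    - intros x y. apply functional_extensionality_dep; intro j.
      unfold prod_mul. destruct (classic (i = j)) as [e|n].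
      + subst j. rewrite !Fi. apply fhom.
      + rewrite !Fn; auto.
    - intros x y e. apply functional_extensionality_dep; intro j.
      destruct (classic (i = j)) as [e'|n].
      + subst j. apply finj. rewrite <- !Fi. rewrite e. reflexivity.
      + rewrite <- (Fn x j n), <- (Fn y j n), e. reflexivity.
    - intro y. destruct (fsurj (y i)) as [a ha].
      exists (@upd I A y i a). apply functional_extensionality_dep; intro j.
      destruct (classic (i = j)) as [e'|n].
      + subst j. rewrite Fi, upd_eq. exact ha.
      + rewrite Fn by auto. rewrite upd_neq by auto; reflexivity.
    - intros U hU x hx. destruct (hU _ hx) as [l [V [V1 [V2 V3]]]].
      exists l, (@upd I (fun j => A j -> Prop) V i (fun a => V i (f a))).
      split; [|split].
      + intros k hk. destruct (classic (i = k)) as [e|n].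
        * subst k. rewrite upd_eq. apply fcont. apply V1; auto.
        * rewrite upd_neq by auto. apply V1; auto.
      + intros k hk. destruct (classic (i = k)) as [e|n].
        * subst k. rewrite upd_eq. rewrite <- Fi. apply V2; auto.
        * rewrite upd_neq by auto. rewrite <- (Fn x k n). apply V2; auto.
      + intros y hy. apply V3. intros k hk. specialize (hy k hk).
        destruct (classic (i = k)) as [e|n].
        * subst k. rewrite upd_eq in hy. rewrite Fi. exact hy.
        * rewrite upd_neq in hy by auto. rewrite Fn by auto. exact hy. }
  specialize (H F Faut).
  intros U hU.
  set (W := fun x : forall j, A j => U (x i)).
  assert (hW : prod_open G W).
  { intros x hx. exists (i :: nil), (@upd I (fun j => A j -> Prop) (fun _ _ => True) i U).
    split; [|split].
    - intros k [e|[]]. subst k. rewrite upd_eq. exact hU.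
    - intros k [e|[]]. subst k. rewrite upd_eq. exact hx.
    - intros y hy. specialize (hy i (or_introl eq_refl)). rewrite upd_eq in hy. exact hy. }
  specialize (H W hW).
  apply (tg_open_ext (G i)) with
    (U := fun c => exists N, (tg_open (G i) N /\ (forall c, N c -> exists x, U x /\ c = f x)) /\ N c).
  2: { apply tg_open_union. intros N [h _]. exact h. }
  intro b. split.
  - intros [N [[_ hN] hb]]. auto.
  - intros [a [ha hb]].
    set (x0 := @upd I A (fun j => tg_one (G j)) i a).
    set (p := F x0).
    assert (pi : p i = b) by (unfold p; rewrite Fi; unfold x0; rewrite upd_eq; auto).
    assert (hp : exists x, W x /\ p = F x).
    { exists x0. split; [unfold W, x0; rewrite upd_eq; exact ha | reflexivity]. }
    destruct (H p hp) as [l [V [V1 [V2 V3]]]].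
    exists (fun c => forall k, In k l -> V k (@upd I A p i c k)).
    split; [split|].
    + clear V3. induction l as [|h l IH].
      * apply (tg_open_ext (G i)) with (U := fun _ => True).
        { intro c; split; [intros _ k []|auto]. }
        apply tg_open_full.
      * assert (IH' := IH (fun k hk => V1 k (or_intror hk)) (fun k hk => V2 k (or_intror hk))).
        apply (tg_open_ext (G i)) with
          (U := fun c => (fun c => V h (@upd I A p i c h)) c /\ (fun c => forall k, In k l -> V k (@upd I A p i c k)) c).
        { intro c; split.
          - intros [h1 h2] k [e|hk]; [subst k; exact h1 | auto].
          - intro hc; split; [apply hc; left; reflexivity | intros k hk; apply hc; right; exact hk]. }
        apply tg_open_inter; auto.
        destruct (classic (i = h)) as [e|n].
        { subst h. apply (tg_open_ext (G i)) with (U := V i).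
          - intro c; rewrite upd_eq; tauto.
          - apply V1; left; auto. }
        { apply (tg_open_ext (G i)) with (U := fun _ => True).
          - intro c; rewrite upd_neq by auto. split; auto. intros _. apply V2; left; auto.
          - apply tg_open_full. }
    + intros c hc. destruct (V3 _ hc) as [x [hx e]].
      exists (x i). split; [exact hx|].
      rewrite <- Fi, <- e. rewrite upd_eq. reflexivity.
    + intros k hk. rewrite <- pi, upd_self. apply V2; auto.
Qed.
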